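(* Let $p$ be a prime, let $n,m$ be positive integers, let $F:\mathbb{F}_{p^n}\to\mathbb{F}_{p^m}$ be a function and let $\theta>0$. Let $G_F=\{(x,F(x)) : x\in\mathbb{F}_{p^n}\}\subseteq H=\mathbb{F}_{p^n}\times\mathbb{F}_{p^m}$ (additive group). Then $G_F$ is a partial geometric difference set in $H$ with parameters $(p^{n+m},p^n;\alpha,\beta)$ for some constants $\alpha,\beta$ with $\beta-\alpha=\theta$ if and only if $|\widehat{F_b}(a)|\in\{0,\sqrt{\theta}\}$ for all $b\in\mathbb{F}_{p^m}^*$ and all $a\in\mathbb{F}_{p^n}$. Moreover, in this case $\theta=p^{n+s}$ for some integer $0\le s\le n$, and $\alpha=p^{2n-m}-p^{n+s-m}$, $\beta=p^{n+s}+p^{2n-m}-p^{n+s-m}$.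
   Context: $\zeta_p=e^{2\pi i/p}$ and $Tr_n(z)=\sum_{i=0}^{n-1}z^{p^i}$ is the absolute trace of $\mathbb{F}_{p^n}$ (similarly $Tr_m$). For $b\in\mathbb{F}_{p^m}^*$ the component function is $F_b(x)=Tr_m(bF(x))$, and its Walsh transform is $\widehat{F_b}(a)=\sum_{x\in\mathbb{F}_{p^n}}\zeta_p^{F_b(x)-Tr_n(ax)}$ for $a\in\mathbb{F}_{p^n}$. Partial geometric difference set: let $G$ be an abelian group of order $v$ (written additively) and $S\subseteq G$ with $|S|=k$, where $v>k>2$. For $g\in G$ let $\delta(g)=|\{(s,t)\in S\times S: g=s-t\}|$. $S$ is a partial geometric difference set (PGDS) with parameters $(v,k;\alpha,\beta)$ if for every $x\in G$, $\sum_{y\in S}\delta(x-y)=\alpha$ when $x\notin S$ and $=\beta$ when $x\in S$. *)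

(* Defs.v *)
From HB Require Import structures.
From mathcomp Require Import all_boot all_order all_algebra all_field.
Set Implicit Arguments. Unset Strict Implicit. Unset Printing Implicit Defensive.
Import Order.TTheory GRing.Theory Num.Theory.
Local Open Scope ring_scope.

(* zeta_p = e^{2 pi i / p}, as an element of algC.  In algC, [p.-root (-1)]
   is the p-th root of -1 of minimal non-negative argument, i.e. e^{i pi/p}
   (for p > 1), so its square is e^{2 pi i/p}. *)
Definition zeta (p : nat) : algC := (p.-root (-1)) ^+ 2.

Definition abs_tr (K : finFieldType) (p k : nat) (z : K) : K :=
  \sum_(i < k) z ^+ (p ^ i).

(* the integer in {0,..,p-1} representing an element of the prime field F_p
   inside K (the trace takes values there) *)
Definition fp_idx (K : finFieldType) (p : nat) (t : K) : nat :=
  index t [seq (i%:R : K) | i <- iota 0 p].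

Definition zpow (K : finFieldType) (p : nat) (t : K) : algC :=
  zeta p ^+ fp_idx p t.

(* Walsh transform of the component function F_b = Tr_m(b F(x)) at a:
   sum_x zeta^(Tr_m(b F x) - Tr_n(a x)) *)
Definition walsh (K L : finFieldType) (p n m : nat) (F : K -> L) (b : L) (a : K)
  : algC :=
  \sum_(x : K) zpow p (abs_tr p m (b * F x)) / zpow p (abs_tr p n (a * x)).

Definition pgds_delta (G : finZmodType) (S : {set G}) (g : G) : nat :=
  #|[set st : G * G | [&& st.1 \in S, st.2 \in S & g == st.1 - st.2]]|.

Definition is_pgds (G : finZmodType) (S : {set G}) (v k alpha beta : nat) : Prop :=
  [/\ #|G| = v, #|S| = k, (k < v)%N &
      forall x : G,
        (\sum_(y in S) pgds_delta S (x - y)%R)%N = (if x \in S then beta else alpha)].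

Definition prodH (K L : finFieldType) := (K * L)%type.
HB.instance Definition _ (K L : finFieldType) := GRing.Zmodule.on (prodH K L).
HB.instance Definition _ (K L : finFieldType) := Finite.on (prodH K L).

Definition graphF (K L : finFieldType) (F : K -> L) : {set prodH K L} :=
  [set ((x, F x) : prodH K L) | x : K].

(* Main.v *)
Set Warnings "-all".
Require Import Defs.
From HB Require Import structures.
From mathcomp Require Import all_boot all_order all_algebra all_field.
From mathcomp Require Import zify ring lra.
Import Order.TTheory GRing.Theory Num.Theory.
Local Open Scope ring_scope.

Module Aux.
Set Implicit Arguments. Unset Strict Implicit.


Lemma zeta_p p : (0 < p)%N -> zeta p ^+ p = 1.
Proof. by move=> hp; rewrite /zeta -exprM mulnC exprM rootCK // sqrrN expr1n. Qed.

Lemma normC_eq1_Re (y : algC) : `|y| = 1 -> 'Re y <= -1 -> y = -1.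
Proof.
move=> hy hre.
have hRe : 'Re y = -1.
  apply/eqP; rewrite eq_le hre /=.
  have := leif_normC_Re_Creal y; rewrite hy => /leifP.
  have hneg : 'Re y < 0 by apply: le_lt_trans hre _; rewrite oppr_lt0 ltr01.
  rewrite ltr0_norm // => h.
  have : - 'Re y <= 1 by move: h; case: (_ \is _) => [/eqP -> // | /ltW].
  by rewrite lerNl.
have := normC2_Re_Im y; rewrite hy hRe sqrrN expr1n => /eqP.
rewrite -subr_eq0 opprD addrA subrr add0r oppr_eq0 sqrf_eq0 => /eqP hIm.
by rewrite (Crect y) hRe hIm mulr0 addr0.
Qed.

Lemma N1_neq1 : (-1 : algC) != 1.
Proof. by rewrite -subr_eq0 -opprD oppr_eq0 -mulr2n pnatr_eq0. Qed.

Lemma zeta_neq1 p : prime p -> zeta p != 1.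
Proof.
move=> pp; have p0 : (0 < p)%N by apply: prime_gt0.
have p1 : (1 < p)%N by apply: prime_gt1.
rewrite /zeta sqrf_eq1; apply/norP; split.
  apply/eqP => r1; have := rootCK p0 (-1 : algC); rewrite r1 expr1n => /eqP.
  by rewrite eq_sym (negPf N1_neq1).
apply/eqP => rN1.
have h2p : (0 < 2 * p)%N by rewrite muln_gt0 p0.
have [u pu] := C_prim_root_exists h2p.
have up : u ^+ p = -1.
  have : (u ^+ p) ^+ 2 = 1 by rewrite -exprM mulnC (prim_expr_order pu).
  move/eqP; rewrite sqrf_eq1 -(prim_order_dvd pu) => /orP [|/eqP //].
  by move=> /(dvdn_leq p0); lia.
have u2n1 : u ^+ 2 != 1.
  by rewrite -(prim_order_dvd pu); apply/negP => /(dvdn_leq (isT : (0 < 2)%N)); lia.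
have normu : `|u| = 1.
  apply/eqP; rewrite -(pexpr_eq1 h2p) ?normr_ge0 // -normrX (prim_expr_order pu).
  by rewrite normr1.
have [y [yp ny Iy uy]] : exists y, [/\ y ^+ p = -1, `|y| = 1, 0 <= 'Im y &
                                  (u = y \/ u = y^* )].
  have : 'Im u \is Num.real by apply: Creal_Im.
  move=> /real_ge0P [hI | hI].
    by exists u; split => //; left.
  exists u^*; split.
  - by rewrite -rmorphXn up rmorphN1.
  - by rewrite norm_conjC.
  - by rewrite Im_conj oppr_ge0 ltW.
  - by right; rewrite conjCK.
have := rootC_Re_max p0 yp Iy; rewrite rN1 raddfN /= (Creal_ReP 1 _) ?rpred1 //.
move=> /(normC_eq1_Re ny) yN1.
have uN1 : u = -1 by case: uy => ->; rewrite yN1 // rmorphN1.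
by move: u2n1; rewrite uN1 sqrrN expr1n eqxx.
Qed.

Lemma zeta_prim p : prime p -> p.-primitive_root (zeta p).
Proof.
move=> pp; have p0 := prime_gt0 pp.
have [d pd dp] := prim_order_exists p0 (zeta_p p0).
have d1 : d != 1%N.
  apply/eqP => d1; move: pd; rewrite d1 => /prim_expr_order; rewrite expr1 => h.
  by move: (zeta_neq1 pp); rewrite h eqxx.
by move/(prime_nt_dvdP pp d1): dp => dp; rewrite dp in pd.
Qed.

Section PrimeField.
Variables (K : finFieldType) (p : nat).
Hypothesis pK : p \in [pchar K].

Let pp : prime p. Proof. exact: pcharf_prime pK. Qed.
Let p0 : (0 < p)%N. Proof. exact: prime_gt0 pp. Qed.

Lemma frobD (x y : K) : (x + y) ^+ p = x ^+ p + y ^+ p.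
Proof. by rewrite -!(pFrobenius_autE pK) rmorphD. Qed.

Lemma natr_inj_p i j : (i < p)%N -> (j < p)%N -> (i%:R : K) = j%:R -> i = j.
Proof.
wlog le_ij : i j / (i <= j)%N.
  move=> W hi hj e; case: (leqP i j) => h; first exact: W.
  by apply/esym/W => //; apply: ltnW.
move=> hi hj /eqP; rewrite eq_sym -subr_eq0 -natrB // -(dvdn_pcharf pK) => hd.
case: (posnP (j - i)) => [h|h]; first by lia.
by have := dvdn_leq h hd; lia.
Qed.

Lemma natr_seq_uniq : uniq [seq (i%:R : K) | i <- iota 0 p].
Proof.
rewrite map_inj_in_uniq ?iota_uniq // => i j; rewrite !mem_iota !add0n.
exact: natr_inj_p.
Qed.

Lemma fp_idx_nat i : (i < p)%N -> fp_idx p (i%:R : K) = i.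
Proof.
move=> hi; rewrite /fp_idx.
have -> : (i%:R : K) = nth 0 [seq (i%:R : K) | i <- iota 0 p] i.
  by rewrite (nth_map 0%N) ?size_iota // nth_iota.
by rewrite index_uniq ?natr_seq_uniq // size_map size_iota.
Qed.

Lemma zpow_nat i : zpow p (i%:R : K) = zeta p ^+ i.
Proof.
rewrite /zpow -(GRing.natr_mod_pchar pK) fp_idx_nat ?ltn_mod //.
by rewrite expr_mod // zeta_p.
Qed.

Lemma natr_frob i : (i%:R : K) ^+ p = i%:R.
Proof.
elim: i => [|i IH]; first by rewrite expr0n; case: (p) p0.
by rewrite -addn1 natrD frobD IH expr1n.
Qed.

Lemma frob_fixed (t : K) : t ^+ p = t -> exists i, t = i%:R.
Proof.
move=> ht.
case: (boolP (t \in [seq (i%:R : K) | i <- iota 0 p])).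
  by move/mapP => [i _ ->]; exists i.
move=> tnin; exfalso.
pose P : {poly K} := 'X^p - 'X.
have p1 : (1 < p)%N by apply: prime_gt1.
have sP : size P = p.+1.
  rewrite /P size_polyDl size_polyXn // size_polyN size_polyX; lia.
have P0 : P != 0 by rewrite -size_poly_eq0 sP.
have Ha : all (root P) (t :: [seq (i%:R : K) | i <- iota 0 p]).
  rewrite /= ; apply/andP; split.
    by rewrite /root /P !hornerE ht subrr.
  apply/allP => x /mapP [i _ ->].
  by rewrite /root /P !hornerE natr_frob subrr.
have := max_poly_roots P0 Ha.
by rewrite /= tnin natr_seq_uniq size_map size_iota sP ltnn => /(_ isT).
Qed.

End PrimeField.

Section Trace.
Variables (K : finFieldType) (p k : nat).
Hypothesis pK : p \in [pchar K].
Hypothesis hK : #|K| = (p ^ k)%N.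
Hypothesis hk : (0 < k)%N.

Let pp : prime p. Proof. exact: pcharf_prime pK. Qed.
Let p0 : (0 < p)%N. Proof. exact: prime_gt0 pp. Qed.
Let p1 : (1 < p)%N. Proof. exact: prime_gt1 pp. Qed.

Definition psi (z : K) : algC := zpow p (abs_tr p k z).

Lemma frobDn (x y : K) i : (x + y) ^+ (p ^ i) = x ^+ (p ^ i) + y ^+ (p ^ i).
Proof.
elim: i => [|i IH]; first by rewrite !expn0 !expr1.
by rewrite expnSr !exprM IH frobD.
Qed.

Lemma tr_add (x y : K) : abs_tr p k (x + y) = abs_tr p k x + abs_tr p k y.
Proof. by rewrite /abs_tr -big_split; apply: eq_bigr => i _; rewrite frobDn. Qed.

Lemma tr0 : abs_tr p k (0 : K) = 0.
Proof.
apply: (addrI (abs_tr p k (0 : K))); by rewrite -tr_add !addr0.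
Qed.

Lemma tr_frob (z : K) : (abs_tr p k z) ^+ p = abs_tr p k z.
Proof.
rewrite -(pFrobenius_autE pK) /abs_tr rmorph_sum /=.
under eq_bigr do rewrite pFrobenius_autE -exprM -expnSr.
move: hK hk; case: k => // k' hK' _.
rewrite big_ord_recr big_ord_recl /= expn0 expr1.
have -> : z ^+ (p ^ k'.+1) = z by rewrite -hK' expf_card.
by rewrite addrC.
Qed.

Lemma tr_nat (z : K) : exists i, abs_tr p k z = i%:R.
Proof. exact/(frob_fixed pK)/tr_frob. Qed.

Lemma psi_add x y : psi (x + y) = psi x * psi y.
Proof.
rewrite /psi tr_add; have [i ->] := tr_nat x; have [j ->] := tr_nat y.
by rewrite -natrD !(zpow_nat pK) exprD.
Qed.

Lemma psi0 : psi 0 = 1.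
Proof. by rewrite /psi tr0 -(mulr0n 1) (zpow_nat pK 0) expr0. Qed.

Lemma psi_exp z : psi z ^+ p = 1.
Proof.
rewrite /psi; have [i ->] := tr_nat z.
by rewrite (zpow_nat pK) -exprM mulnC exprM zeta_p // expr1n.
Qed.

Lemma psi_neq0 z : psi z != 0.
Proof.
apply/negP => /eqP h; have := psi_exp z; rewrite h expr0n.
by case: (p) p0 => // n _ /eqP; rewrite eq_sym oner_eq0.
Qed.

Lemma psiN z : psi (- z) = (psi z)^-1.
Proof.
have h : psi z * psi (- z) = 1 by rewrite -psi_add subrr psi0.
by rewrite -[RHS]mulr1 -h mulKf // psi_neq0.
Qed.

Lemma norm_psi z : `|psi z| = 1.
Proof.
apply/eqP; rewrite -(pexpr_eq1 p0) ?normr_ge0 // -normrX psi_exp.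
by rewrite normr1.
Qed.

Lemma psi_conj z : (psi z)^* = psi (- z).
Proof.
have h : psi z * (psi z)^* = 1 by rewrite -normCK norm_psi expr1n.
by rewrite psiN -[LHS]mul1r -(mulVf (psi_neq0 z)) -mulrA h mulr1.
Qed.

Lemma psi_unity z : p.-unity_root (psi z).
Proof. by rewrite unity_rootE psi_exp. Qed.

Lemma tr_nonzero : exists z : K, abs_tr p k z != 0.
Proof.
case: (boolP [exists z : K, abs_tr p k z != 0]) => [/existsP //|/existsPn hall]; exfalso.
move: hK hk; case: k hall => // k' hall hK' _.
pose Q : {poly K} := \sum_(i < k'.+1) 'X^(p ^ i).
have hQ z : Q.[z] = abs_tr p k'.+1 z.
  by rewrite /Q horner_sum; apply: eq_bigr => i _; rewrite hornerXn.
have Q0 : Q != 0.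
  apply/negP => /eqP /(congr1 (fun q : {poly K} => q`_(p ^ k'))).
  rewrite coef0 /Q coef_sum (bigD1 ord_max) //= coefXn eqxx big1 ?addr0.
    by move/eqP; rewrite oner_eq0.
  move=> i /eqP hi; rewrite coefXn eqn_exp2l //.
  case: eqP => // h; exfalso; apply: hi; apply: val_inj => /=; lia.
have sQ : (size Q <= (p ^ k').+1)%N.
  apply: leq_trans (size_sum _ _ _) _.
  apply/bigmax_leqP => i _; rewrite size_polyXn ltnS leq_exp2l //.
  by rewrite -ltnS.
have := max_poly_roots Q0 (rs := enum K).
rewrite enum_uniq -cardE hK'.
have -> : all (root Q) (enum K).
  by apply/allP => z _; rewrite /root hQ; apply/negPn; apply: hall.
move=> /(_ isT isT) h; have := leq_trans h sQ.
rewrite expnS ltnS => h2.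
have : (0 < p ^ k')%N by rewrite expn_gt0 p0.
nia.
Qed.

Lemma psi_eq1 (z : K) : (psi z == 1) = (abs_tr p k z == 0).
Proof.
rewrite /psi; have [i ->] := tr_nat z.
by rewrite (zpow_nat pK) -(prim_order_dvd (zeta_prim pp)) (GRing.dvdn_pcharf pK).
Qed.

Lemma psi_sum (a : K) :
  \sum_(x : K) psi (a * x) = if a == 0 then (#|K|)%:R else 0.
Proof.
case: eqP => [->|/eqP a0].
  under eq_bigr do rewrite mul0r psi0.
  by rewrite sumr_const.
have [z hz] := tr_nonzero.
have hz1 : psi z != 1 by rewrite psi_eq1.
set S := \sum_(x : K) _.
have hS : S = S * psi z.
  rewrite {1}/S (reindex_inj (addIr (z / a))) /S mulr_suml.
  by apply: eq_bigr => x _; rewrite mulrDr psi_add mulrCA divff // mulr1.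
apply/eqP; move: hS => /eqP; rewrite -subr_eq0 -{1}(mulr1 S) -mulrBr mulf_eq0.
by rewrite subr_eq0 [1 == _]eq_sym (negPf hz1) orbF.
Qed.

End Trace.



Section Main.
Variables (p n m : nat) (K L : finFieldType).
Hypotheses (hp : prime p) (hn : (0 < n)%N) (hm : (0 < m)%N)
    (hK : #|K| = (p ^ n)%N) (hL : #|L| = (p ^ m)%N).
Variable F : K -> L.

Let pK : p \in [pchar K]. Proof. exact: card_finPcharP hK hp. Qed.
Let pL : p \in [pchar L]. Proof. exact: card_finPcharP hL hp. Qed.

Let H := prodH K L.
Let psiK (z : K) := psi p n z.
Let psiL (z : L) := psi p m z.
Definition chi (a : K) (b : L) (h : H) : algC := psiL (b * h.2) * psiK (a * h.1).
Definition G (x : K) : H := (x, F x).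
Definition S := graphF F.
Definition C a b := \sum_(x : K) chi a b (G x).

Lemma addH (h1 h2 : H) : (h1 + h2).1 = h1.1 + h2.1 /\ (h1 + h2).2 = h1.2 + h2.2.
Proof. by []. Qed.
Lemma oppH (h : H) : (- h).1 = - h.1 /\ (- h).2 = - h.2.
Proof. by []. Qed.
Lemma zeroH : (0 : H) = (0, 0). Proof. by []. Qed.

Lemma chiD a b (h1 h2 : H) : chi a b (h1 + h2) = chi a b h1 * chi a b h2.
Proof.
rewrite /chi /psiK /psiL /= !mulrDr !(psi_add pK hK hn) !(psi_add pL hL hm); ring.
Qed.

Lemma chi0 a b : chi a b 0 = 1.
Proof. by rewrite /chi /psiK /psiL /= !mulr0 (psi0 _ pK) (psi0 _ pL) mulr1. Qed.

Lemma chi00 h : chi 0 0 h = 1.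
Proof. by rewrite /chi /psiK /psiL /= !mul0r (psi0 _ pK) (psi0 _ pL) mulr1. Qed.

Lemma chiN a b h : chi a b (- h) = (chi a b h)^*.
Proof.
rewrite /chi /psiK /psiL /= rmorphM /= !(psi_conj pK hK hn) !(psi_conj pL hL hm).
by rewrite !mulrN.
Qed.

Lemma chi_neq0 a b h : chi a b h != 0.
Proof. by rewrite /chi mulf_eq0 negb_or (psi_neq0 pK hK hn) (psi_neq0 pL hL hm). Qed.

Lemma chiNV a b h : chi a b (- h) = (chi a b h)^-1.
Proof.
have e : chi a b h * chi a b (- h) = 1 by rewrite -chiD subrr chi0.
by rewrite -[RHS]mulr1 -e mulKf // chi_neq0.
Qed.

Lemma sumH (f : H -> algC) : \sum_(h : H) f h = \sum_(u : K) \sum_(v : L) f (u, v).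
Proof. by rewrite pair_big; apply: eq_bigr => -[u v]. Qed.

Lemma sum_chi a b :
  \sum_(h : H) chi a b h = if (a == 0) && (b == 0) then (#|K| * #|L|)%:R else 0.
Proof.
rewrite sumH /chi /=.
under eq_bigr do rewrite -mulr_suml.
rewrite -mulr_sumr (psi_sum pL hL hm) (psi_sum pK hK hn).
by case: (a == 0); case: (b == 0); rewrite ?mulr0 ?mul0r // natrM mulrC.
Qed.

Lemma sum_chi_dual h :
  \sum_(a : K) \sum_(b : L) chi a b h = if h == 0 then (#|K| * #|L|)%:R else 0.
Proof.
rewrite /chi.
under eq_bigr do rewrite -mulr_suml.
rewrite -mulr_sumr.
under eq_bigr do rewrite mulrC.
under [X in _ * X]eq_bigr do rewrite mulrC.
rewrite (psi_sum pL hL hm) (psi_sum pK hK hn).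
case: h => u v /=; rewrite -pair_eqE /=.
by case: (u == 0); case: (v == 0); rewrite ?mulr0 ?mul0r // natrM mulrC.
Qed.

Lemma G_inj : injective G.
Proof. by move=> x y /(congr1 fst). Qed.

Lemma sumS (f : H -> algC) : \sum_(y in S) f y = \sum_(x : K) f (G x).
Proof.
rewrite /S /graphF (big_imset _ (in2W G_inj)) /=.
by apply: eq_bigl => x.
Qed.

Lemma cardS : #|S| = #|K|.
Proof. by rewrite /S /graphF (card_imset _ G_inj) cardT -cardE. Qed.

Lemma delta_R (g : H) : (pgds_delta S g)%:R =
  \sum_(x1 : K) \sum_(x2 : K) ((g == G x1 - G x2) : nat)%:R :> algC.
Proof.
rewrite /pgds_delta -sum1_card natr_sum big_mkcond /=.
set A := [set st | _].
transitivity (\sum_(s : H) \sum_(t : H) (if (s, t) \in A then 1 else 0 : algC)).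
  by rewrite pair_bigA; apply: eq_bigr => -[s t].
transitivity (\sum_(s in S) \sum_(t in S) ((g == s - t) : nat)%:R : algC); last first.
  by rewrite sumS; apply: eq_bigr => x1 _; rewrite sumS.
rewrite [RHS]big_mkcond /=; apply: eq_bigr => s _.
case: (boolP (s \in S)) => sS.
  rewrite [RHS]big_mkcond /=; apply: eq_bigr => t _.
  rewrite /A inE /= sS; case: (t \in S) => //=.
  by case: (g == _).
by apply: big1 => t _; rewrite /A inE /= (negPf sS).
Qed.

Definition cnt (h : H) : nat := (\sum_(y in S) pgds_delta S (h - y)%R)%N.

Lemma cnt_R h : (cnt h)%:R = \sum_(x3 : K) \sum_(x1 : K) \sum_(x2 : K)
   ((h - G x3 == G x1 - G x2) : nat)%:R :> algC.
Proof.
rewrite /cnt natr_sum sumS; apply: eq_bigr => x3 _; exact: delta_R.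
Qed.

Lemma pick (y w : H) a b :
  \sum_(h : H) ((h - y == w) : nat)%:R * chi a b h = chi a b (w + y).
Proof.
rewrite (bigD1 (w + y)) //= addrK eqxx mul1r big1 ?addr0 // => h hne.
by rewrite subr_eq (negPf hne) mul0r.
Qed.

Lemma hat_cnt a b :
  \sum_(h : H) (cnt h)%:R * chi a b h = C a b * (C a b * (C a b)^*).
Proof.
transitivity (\sum_(x3 : K) \sum_(x1 : K) \sum_(x2 : K)
                 chi a b (G x1 - G x2 + G x3)).
  under eq_bigr => h _ do rewrite cnt_R mulr_suml.
  rewrite exchange_big; apply: eq_bigr => x3 _.
  under eq_bigr => h _ do rewrite mulr_suml.
  rewrite exchange_big; apply: eq_bigr => x1 _.
  under eq_bigr => h _ do rewrite mulr_suml.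
  rewrite exchange_big; apply: eq_bigr => x2 _.
  exact: pick.
rewrite /C mulr_suml; apply: eq_bigr => x3 _.
rewrite rmorph_sum mulr_suml mulr_sumr; apply: eq_bigr => x1 _.
rewrite !mulr_sumr; apply: eq_bigr => x2 _.
by rewrite !chiD chiN mulrC.
Qed.

Lemma hat_S a b :
  \sum_(h : H) ((h \in S) : nat)%:R * chi a b h = C a b.
Proof.
rewrite (bigID (fun h => h \in S)) /= [X in _ + X]big1 ?addr0.
  by rewrite /C -sumS; apply: eq_bigr => h ->; rewrite mul1r.
by move=> h /negPf ->; rewrite mul0r.
Qed.

Lemma inversion (f : H -> algC) (h : H) :
  (#|K| * #|L|)%:R * f h =
  \sum_(a : K) \sum_(b : L) (\sum_(k : H) f k * chi a b k) * chi a b (- h).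
Proof.
transitivity (\sum_(k : H) f k * \sum_(a : K) \sum_(b : L) chi a b (k - h)).
  rewrite (bigD1 h) //= subrr sum_chi_dual eqxx mulrC big1 ?addr0 // => k hk.
  by rewrite sum_chi_dual subr_eq0 (negPf hk) mulr0.
under eq_bigr => k _ do rewrite mulr_sumr.
rewrite exchange_big; apply: eq_bigr => a _.
under eq_bigr => k _ do rewrite mulr_sumr.
rewrite exchange_big; apply: eq_bigr => b _.
by rewrite mulr_suml; apply: eq_bigr => k _; rewrite chiD mulrA.
Qed.

Lemma walsh_C b a : walsh p n m F b a = C (- a) b.
Proof.
rewrite /walsh /C; apply: eq_bigr => x _.
by rewrite /chi /psiK /psiL /= mulNr (psiN pK hK hn).
Qed.

Lemma C_b0 a : a != 0 -> C a 0 = 0.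
Proof.
move=> a0; rewrite /C /chi /psiK /psiL /=.
under eq_bigr do rewrite mul0r (psi0 _ pL) mul1r.
by rewrite (psi_sum pK hK hn) (negPf a0).
Qed.

Lemma C00 : C 0 0 = (#|K|)%:R.
Proof. by rewrite /C; under eq_bigr do rewrite chi00; rewrite sumr_const cardT -cardE. Qed.

Lemma norm_cases (c t : algC) : 0 <= t ->
  (c * (c * c^*) = t * c <-> (`|c| = 0 \/ `|c| = sqrtC t)).
Proof.
move=> t0; rewrite -normCK; split.
  rewrite [t * c]mulrC => /eqP; rewrite -subr_eq0 -mulrBr mulf_eq0 subr_eq0.
  case/orP => [/eqP c0|/eqP h].
    by left; rewrite c0 normr0.
  right; apply/eqP; rewrite -(eqrXn2 (_ : 0 < 2)%N) ?normr_ge0 ?sqrtC_ge0 //.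
  by rewrite sqrtCK h.
case=> [/eqP|->]; last by rewrite sqrtCK mulrC.
by rewrite normr_eq0 => /eqP ->; rewrite !mul0r mulr0.
Qed.

Lemma pgds_to_walsh alpha beta (t : algC) :
  is_pgds S (p ^ (n + m)) (p ^ n) alpha beta -> beta%:R - alpha%:R = t ->
  0 <= t -> forall (b : L) (a : K), b != 0 ->
  `|walsh p n m F b a| = 0 \/ `|walsh p n m F b a| = sqrtC t.
Proof.
move=> [_ _ _ hx] ht t0 b a b0.
rewrite walsh_C; apply/(norm_cases _ t0).
have hc h : (cnt h)%:R = alpha%:R + t * ((h \in S) : nat)%:R :> algC.
  rewrite /cnt hx; case: (h \in S); last by rewrite mulr0 addr0.
  by rewrite mulr1 -ht addrC subrK.
rewrite -hat_cnt; under eq_bigr do rewrite hc mulrDl.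
rewrite big_split /= -mulr_sumr sum_chi (negPf b0) andbF mulr0 add0r.
under eq_bigr do rewrite -mulrA.
by rewrite -mulr_sumr hat_S.
Qed.

Lemma walsh_to_pgds (t : algC) : 0 <= t ->
  (forall (b : L) (a : K), b != 0 ->
    `|walsh p n m F b a| = 0 \/ `|walsh p n m F b a| = sqrtC t) ->
  exists alpha beta : nat,
    is_pgds S (p ^ (n + m)) (p ^ n) alpha beta /\ beta%:R - alpha%:R = t.
Proof.
move=> t0 hw.
have hhat a b : (a != 0) || (b != 0) -> C a b * (C a b * (C a b)^*) = t * C a b.
  case: (eqVneq b 0) => [-> |b0 _]; first rewrite /= orbF => a0.
    by rewrite C_b0 // !mul0r mulr0.
  by apply/(norm_cases _ t0); have := hw b (- a) b0; rewrite walsh_C opprK.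
pose f h := (cnt h)%:R - t * ((h \in S) : nat)%:R.
have hf a b : \sum_(k : H) f k * chi a b k = C a b * (C a b * (C a b)^*) - t * C a b.
  rewrite /f; under eq_bigr do rewrite mulrBl -mulrA.
  by rewrite sumrB hat_cnt -mulr_sumr hat_S.
have N0 : (#|K| * #|L|)%:R != 0 :> algC.
  by rewrite pnatr_eq0 hK hL -expnD -lt0n expn_gt0 prime_gt0.
have hinv h : (#|K| * #|L|)%:R * f h = \sum_(k : H) f k * chi 0 0 k.
  rewrite (inversion f h) (bigD1 (0 : K)) //= [X in _ + X]big1 ?addr0; last first.
    move=> a a0; apply: big1 => b _.
    by rewrite hf hhat ?a0 // subrr mul0r.
  rewrite (bigD1 (0 : L)) //= [X in _ + X]big1 ?addr0; last first.
    by move=> b b0; rewrite hf hhat ?b0 ?orbT // subrr mul0r.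
  by rewrite chi00 mulr1.
have fc h h' : f h = f h'.
  by apply: (mulfI N0); rewrite !hinv.
pose h0 : H := (0, F 0 + 1).
have h0S : h0 \notin S.
  apply/negP => /imsetP [x _ [x0 e]].
  by move: e; rewrite -x0 -{2}(addr0 (F 0)) => /addrI /eqP; rewrite oner_eq0.
have GS x : G x \in S by apply/imsetP; exists x.
exists (cnt h0), (cnt (G 0)); split; last first.
  have := fc (G 0) h0; rewrite /f GS (negPf h0S) mulr0 subr0 mulr1 => e.
  by rewrite -e opprB addrC subrK.
split.
- by rewrite card_prod hK hL expnD.
- by rewrite cardS hK.
- by rewrite ltn_exp2l ?prime_gt1 // -{1}(addn0 n) ltn_add2l.
move=> x; apply/eqP; rewrite -(eqr_nat algC); apply/eqP.
case: (boolP (x \in S)) => xS.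
  have := fc x (G 0); rewrite /f GS xS; exact: addIr.
have := fc x h0; rewrite /f (negPf h0S) (negPf xS) !mulr0 !subr0 //.
Qed.

Lemma parseval : \sum_(a : K) C a 1 * (C a 1)^* = (#|K| * #|K|)%:R.
Proof.
transitivity (\sum_(a : K) \sum_(x1 : K) \sum_(x2 : K) chi a 1 (G x1 - G x2)).
  apply: eq_bigr => a _; rewrite /C rmorph_sum mulr_suml; apply: eq_bigr => x1 _.
  by rewrite mulr_sumr; apply: eq_bigr => x2 _; rewrite chiD chiN.
have key h : \sum_(a : K) chi a 1 h =
    psiL h.2 * (if h.1 == 0 then (#|K|)%:R else 0).
  rewrite /chi -mulr_sumr mul1r; congr (_ * _).
  under eq_bigr do rewrite mulrC.
  by rewrite /psiK (psi_sum pK hK hn).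
rewrite exchange_big; under eq_bigr do rewrite exchange_big.
transitivity (\sum_(x1 : K) (#|K|)%:R : algC); last first.
  by rewrite sumr_const natrM mulr_natr cardT -cardE.
apply: eq_bigr => x1 _.
rewrite (bigD1 x1) //= [X in _ + X]big1 ?addr0.
  by rewrite key /= !subrr eqxx /psiL (psi0 _ pL) mul1r.
move=> x2 hx; rewrite key /= subr_eq0 eq_sym (negPf hx) mulr0 //.
Qed.

Lemma chi_Aint a b h : chi a b h \in Aint.
Proof.
rewrite /chi rpredM //; apply: (Aint_unity_root (prime_gt0 hp)).
  exact: (psi_unity pL hL hm).
exact: (psi_unity pK hK hn).
Qed.

Lemma C_Aint a b : C a b \in Aint.
Proof. by rewrite /C rpred_sum // => x _; apply: chi_Aint. Qed.

Lemma Cconj_Aint a b : (C a b)^* \in Aint.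
Proof.
by rewrite /C rmorph_sum rpred_sum // => x _ /=; rewrite -chiN chi_Aint.
Qed.

Lemma theta_form (t : algC) : 0 < t ->
  (forall (b : L) (a : K), b != 0 ->
    `|walsh p n m F b a| = 0 \/ `|walsh p n m F b a| = sqrtC t) ->
  exists s : nat, (s <= n)%N /\ t = (p ^ (n + s))%:R.
Proof.
move=> t0 hw.
have hC a : `|C a 1| = 0 \/ `|C a 1| = sqrtC t.
  by have := hw 1 (- a) (oner_neq0 _); rewrite walsh_C opprK.
have hsq a : C a 1 * (C a 1)^* = if C a 1 != 0 then t else 0.
  rewrite -normCK; case: (hC a) => h.
    by move: h => /eqP; rewrite normr_eq0 => /eqP ->; rewrite eqxx normr0 expr0n.
  have -> : C a 1 != 0.
    by rewrite -normr_eq0 h sqrtC_eq0 gt_eqF.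
  by rewrite h sqrtCK.
pose N := #|[pred a | C a 1 != 0]|.
have eN : t * N%:R = (#|K| * #|K|)%:R.
  rewrite -parseval (eq_bigr _ (fun a _ => hsq a)) -big_mkcond /= sumr_const.
  by rewrite mulr_natr.
have N0 : (0 < N)%N.
  rewrite lt0n; apply/negP => /eqP N0; move: eN; rewrite N0 mulr0 => /eqP.
  rewrite eq_sym pnatr_eq0 muln_eq0 orbb hK expn_eq0 => /andP [/eqP p0 _].
  by move: (prime_gt0 hp); rewrite p0.
have [a0 ha0] : exists a0, C a0 1 != 0.
  by move/card_gt0P: N0 => [a0]; rewrite inE => ?; exists a0.
have tA : t \in Aint.
  by have := hsq a0; rewrite ha0 => <-; rewrite rpredM ?C_Aint ?Cconj_Aint.
have NR0 : (N%:R : algC) != 0 by rewrite pnatr_eq0 -lt0n.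
have tQ : t \in Crat.
  have -> : t = (#|K| * #|K|)%:R / N%:R by rewrite -eN mulfK.
  by rewrite rpred_div ?rpred_nat.
have /natrP [tt htt] : t \is a Num.nat.
  by rewrite natrEint Cint_rat_Aint //= ltW.
have e2 : (tt * N = p ^ n * p ^ n)%N.
  by apply/eqP; rewrite -(eqr_nat algC) natrM -htt eN hK.
have : (tt %| p ^ (n + n))%N by rewrite expnD -e2 dvdn_mulr.
case/(dvdn_pfactor _ _ hp) => e le_e ett.
have NK : (N <= p ^ n)%N by rewrite -hK max_card.
have ne : (n <= e)%N.
  have : (p ^ n * p ^ n <= p ^ e * p ^ n)%N by rewrite -e2 ett leq_mul2l NK orbT.
  rewrite leq_pmul2r ?expn_gt0 ?prime_gt0 //.
  by rewrite leq_exp2l ?prime_gt1.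
by exists (e - n)%N; split; [lia | rewrite htt ett subnKC].
Qed.

Lemma expz_sub (P : algC) (a b : nat) : P != 0 -> P ^ (a%:Z - b%:Z) = P ^+ a / P ^+ b.
Proof. by move=> P0; rewrite expfzDr // -invr_expz. Qed.

Lemma alpha_formula alpha beta (t : algC) (s : nat) :
  is_pgds S (p ^ (n + m)) (p ^ n) alpha beta -> beta%:R - alpha%:R = t ->
  t = (p ^ (n + s))%:R ->
  alpha%:R = (p%:R : algC) ^ ((2 * n)%:Z - m%:Z)
             - (p%:R : algC) ^ ((n + s)%:Z - m%:Z)
  /\ beta%:R = (p ^ (n + s))%:R + (p%:R : algC) ^ ((2 * n)%:Z - m%:Z)
             - (p%:R : algC) ^ ((n + s)%:Z - m%:Z).
Proof.
move=> [_ _ _ hx] ht hts.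
have hc h : (cnt h)%:R = alpha%:R + t * ((h \in S) : nat)%:R :> algC.
  rewrite /cnt hx; case: (h \in S); last by rewrite mulr0 addr0.
  by rewrite mulr1 -ht addrC subrK.
have tot : (#|K|%:R : algC) * (#|K|%:R * #|K|%:R)
           = alpha%:R * (#|K| * #|L|)%:R + t * #|K|%:R.
  have := hat_cnt 0 0; rewrite C00 rmorph_nat => <-.
  under eq_bigr do rewrite chi00 mulr1 hc.
  rewrite big_split /= sumr_const -mulr_sumr.
  have := hat_S 0 0; rewrite C00; under eq_bigr do rewrite chi00 mulr1.
  move=> ->.
  have -> : #|[pred x : H | true]| = (#|K| * #|L|)%N by exact: card_prod.
  by rewrite !mulr_natr.
set P : algC := p%:R.
have P0 : P != 0 by rewrite pnatr_eq0 -lt0n prime_gt0.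
have ha : alpha%:R = P ^ ((2 * n)%:Z - m%:Z) - P ^ ((n + s)%:Z - m%:Z).
  have -> : ((2 * n)%:Z - m%:Z = (3 * n)%:Z - (n + m)%:Z)%R by lia.
  have -> : ((n + s)%:Z - m%:Z = (2 * n + s)%:Z - (n + m)%:Z)%R by lia.
  rewrite !expz_sub //.
  have tot' : P ^+ n * (P ^+ n * P ^+ n)
      = alpha%:R * (P ^+ n * P ^+ m) + P ^+ (n + s) * P ^+ n.
    by move: tot; rewrite hts hK hL !natrM !natrX.
  have -> : P ^+ (3 * n) = P ^+ n * (P ^+ n * P ^+ n).
    by rewrite -!exprD; congr (_ ^+ _); lia.
  rewrite tot'.
  have -> : P ^+ (2 * n + s) = P ^+ (n + s) * P ^+ n.
    by rewrite -!exprD; congr (_ ^+ _); lia.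
  rewrite (exprD P n m).
  have Pn : P ^+ n != 0 by rewrite expf_neq0.
  have Pm : P ^+ m != 0 by rewrite expf_neq0.
  by field; rewrite Pn Pm.
split => //.
have -> : beta%:R = t + alpha%:R :> algC by rewrite -ht subrK.
by rewrite ha hts addrA.
Qed.

End Main.

End Aux.
Import Aux.

Theorem mainTheorem1 (p n m : nat) (K L : finFieldType)
    (hp : prime p) (hn : (0 < n)%N) (hm : (0 < m)%N)
    (hK : #|K| = (p ^ n)%N) (hL : #|L| = (p ^ m)%N)
    (F : K -> L) (theta : algC) (htheta : 0 < theta) :
  ((exists alpha beta : nat,
       is_pgds (graphF F) (p ^ (n + m)) (p ^ n) alpha beta
       /\ beta%:R - alpha%:R = theta)
   <->
   (forall (b : L) (a : K), b != 0 ->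
       `|walsh p n m F b a| = 0 \/ `|walsh p n m F b a| = sqrtC theta))
  /\
  ((forall (b : L) (a : K), b != 0 ->
       `|walsh p n m F b a| = 0 \/ `|walsh p n m F b a| = sqrtC theta) ->
   exists s : nat, [/\ (s <= n)%N,
     theta = (p ^ (n + s))%:R &
     forall alpha beta : nat,
       is_pgds (graphF F) (p ^ (n + m)) (p ^ n) alpha beta ->
       beta%:R - alpha%:R = theta ->
       alpha%:R = (p%:R : algC) ^ ((2 * n)%:Z - m%:Z)
                  - (p%:R : algC) ^ ((n + s)%:Z - m%:Z)
       /\ beta%:R = (p ^ (n + s))%:R + (p%:R : algC) ^ ((2 * n)%:Z - m%:Z)
                  - (p%:R : algC) ^ ((n + s)%:Z - m%:Z)]).
Proof.
split.
  split.
    move=> [alpha [beta [hpg ht]]].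
    exact: (pgds_to_walsh hp hn hm hK hL hpg ht (ltW htheta)).
  by move=> hw; exact: (walsh_to_pgds hp hn hm hK hL (ltW htheta) hw).
move=> hw; have [s [sn ts]] := theta_form hp hn hm hK hL htheta hw.
exists s; split => // alpha beta hpg ht.
exact: (alpha_formula hp hn hm hK hL hpg ht ts).
Qed.
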